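(* Let $\mu,\nu\in P_1(\mathbb{R}^d)$. The following are equivalent: (i) $\int\varphi\,d\mu\le\int\varphi\,d\nu$ for every lower semicontinuous proper convex $\varphi:\mathbb{R}^d\to\mathbb{R}\cup\{+\infty\}$ such that both integrals exist in the extended sense; (ii) $\int\varphi\,d\mu\le\int\varphi\,d\nu$ for every lower semicontinuous proper convex $\varphi$ which is bounded from below; (iii) $\int\varphi\,d\mu\le\int\varphi\,d\nu$ for every Lipschitz continuous convex $\varphi:\mathbb{R}^d\to\mathbb{R}$.
   Context: $P_1(\mathbb{R}^d)$ is the set of Borel probability measures on $\mathbb{R}^d$ with finite first moment. *)

(* Defs.v *)
From HB Require Import structures.
From mathcomp Require Import all_boot all_order all_algebra.
From mathcomp Require Import all_classical all_reals all_analysis.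
From mathcomp Require Import measurable_realfun.
Set Implicit Arguments. Unset Strict Implicit. Unset Printing Implicit Defensive.
Import Order.TTheory GRing.Theory Num.Theory.
Import numFieldNormedType.Exports.
Local Open Scope classical_set_scope.
Local Open Scope ring_scope.

Definition Borel (R : realType) (d : nat) :=
  g_sigma_algebraType (@open 'rV[R]_d).

Definition finite_first_moment (R : realType) (d : nat)
  (mu : probability (Borel R d) R) : Prop :=
  (\int[mu]_x (`|(x : 'rV[R]_d)|)%:E < +oo)%E.

(* properness of phi : R^d -> R \cup {+oo} (values in \bar R, never -oo,
   not identically +oo) *)
Definition proper_fun (R : realType) (d : nat) (phi : 'rV[R]_d -> \bar R) :=
  (forall x, phi x != -oo%E) /\ (exists x, phi x != +oo%E).

(* convexity of an extended-valued function (with mathcomp's convention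
   0 * +oo = 0, irrelevant here since 0 < t < 1) *)
Definition ext_convex (R : realType) (d : nat) (phi : 'rV[R]_d -> \bar R) :=
  forall (x y : 'rV[R]_d) (t : R), 0 < t < 1 ->
    (phi ((1 - t) *: x + t *: y)%R <= (1 - t)%:E * phi x + t%:E * phi y)%E.

(* the integral of phi w.r.t. mu exists in the extended sense:
   phi is measurable and at least one of the integrals of phi^+, phi^- is finite
   (mathcomp's \int is then  \int phi^+ - \int phi^-) *)
Definition integral_exists (R : realType) (d : nat)
  (mu : probability (Borel R d) R) (phi : 'rV[R]_d -> \bar R) :=
  measurable_fun [set: Borel R d] (fun x : Borel R d => phi x) /\
  ((\int[mu]_x (phi^\+ x) < +oo)%E \/ (\int[mu]_x (phi^\- x) < +oo)%E).

Definition lipschitz_fun (R : realType) (d : nat) (phi : 'rV[R]_d -> R) :=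
  exists L : R, forall x y : 'rV[R]_d, `|phi x - phi y| <= L * `|x - y|.

Definition real_convex (R : realType) (d : nat) (phi : 'rV[R]_d -> R) :=
  forall (x y : 'rV[R]_d) (t : R), 0 < t < 1 ->
    phi ((1 - t) *: x + t *: y) <= (1 - t) * phi x + t * phi y.

(* Main.v *)
Require Import Defs.
From HB Require Import structures.
From mathcomp Require Import all_boot all_order all_algebra.
From mathcomp Require Import all_classical all_reals all_analysis.
From mathcomp Require Import measurable_realfun.
From mathcomp Require Import lra ring.
Import Order.TTheory GRing.Theory Num.Theory.
Import numFieldNormedType.Exports.
Local Open Scope classical_set_scope.
Local Open Scope ring_scope.

Section part1.
Local Open Scope ereal_scope.
Lemma int_shift d (T : measurableType d) (R : realType) (P : probability T R)
  (h : T -> \bar R) (k : R) :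
  (0 <= k)%R -> measurable_fun setT h -> (forall x, (-k)%:E <= h x) ->
  \int[P]_x (h x + k%:E) = \int[P]_x h x + k%:E.
Proof.
move=> k0 mh hk.
have hneg x : h^\- x <= k%:E.
  rewrite funenegE ge_max lee_fin k0 andbT leeNl -EFinN; exact: hk.
have hn0 x : 0 <= h^\- x by exact: funeneg_ge0.
have mhn : measurable_fun setT h^\- by exact: measurable_funeneg.
have mhp : measurable_fun setT h^\+ by exact: measurable_funepos.
have ihn : P.-integrable setT h^\-.
  apply: (@le_integrable _ _ _ _ _ _ _ (EFin \o cst k)) => //.
    2: exact: finite_measure_integrable_cst.
  move=> x _ /=; rewrite gee0_abs // ger0_norm //; exact: hneg.
have finn : \int[P]_x h^\- x \is a fin_num.
  rewrite ge0_fin_numE; last exact: integral_ge0.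
  apply: (@le_lt_trans _ _ (\int[P]_x (EFin \o cst k) x)).
    apply: ge0_le_integral => //; first exact/measurable_EFinP/measurable_cst.
  rewrite (_ : EFin \o cst k = cst k%:E) // integral_cst // [X in _ * X](_ : _ = 1%E) ?mule1 ?ltry //; exact: probability_setT.
have pw x : h x + k%:E = h^\+ x + (EFin \o cst k \- h^\-) x.
  rewrite {1}(funeposneg h) /=.
  case: (h^\- x) (hn0 x) (hneg x) => [r| |] // _ _.
  by rewrite addeAC addeA.
under eq_integral => x _ do rewrite pw.
rewrite ge0_integralD //; last 2 first.
- move=> x _ /=; case: (h^\- x) (hn0 x) (hneg x) => [r| |] // _; by rewrite subre_ge0.
- apply: emeasurable_funB => //; exact/measurable_EFinP/measurable_cst.
have -> : \int[P]_x ((EFin \o cst k) x - h^\- x) = \int[P]_x ((EFin \o cst k) \- h^\-) x by [].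
rewrite integralB //; last exact: finite_measure_integrable_cst.
rewrite (_ : EFin \o cst k = cst k%:E) // integral_cst // [X in _ * X](_ : _ = 1%E); last exact: probability_setT.
rewrite mule1 [in RHS]integralE.
move: finn; move: (\int[P]_x h^\- x) => a; case: a => // a _.
by rewrite -EFinN addeAC addeA.
Qed.

Lemma shift_ge0 (R : realType) (k : R) (y : \bar R) : (-k)%:E <= y -> 0 <= y + k%:E.
Proof. case: y => [r| |] // H; last by rewrite addye // leey. rewrite -EFinD lee_fin. move: H; rewrite lee_fin => ?; lra. Qed.

Lemma mono_lim d (T : measurableType d) (R : realType) (P : probability T R)
  (g : (T -> \bar R)^nat) (f : T -> \bar R) (k : R) :
  (0 <= k)%R -> (forall n, measurable_fun setT (g n)) ->
  (forall n x, (-k)%:E <= g n x) ->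
  (forall x, nondecreasing_seq (g ^~ x)) -> (forall x, g ^~ x @ \oo --> f x) ->
  \int[P]_x g n x @[n --> \oo] --> \int[P]_x f x.
Proof.
move=> k0 mg gk ndg gf.
have mf : measurable_fun setT f by apply: emeasurable_fun_cvg mg _ => x _; exact: gf.
have fk x : (-k)%:E <= f x.
  apply: (cvge_to_ge (gf x)); exact: nearW.
pose g' n x := g n x + k%:E.
have mg' n : measurable_fun setT (g' n).
  by apply: emeasurable_funD => //; exact: measurable_cst.
have g'0 n x : [set: T] x -> 0 <= g' n x.
  move=> _; exact: shift_ge0 (gk n x).
have ndg' x : [set: T] x -> nondecreasing_seq (g'^~ x).
  move=> _ m n mn; rewrite /g' leeD2r //; exact: ndg.
have := @cvg_monotone_convergence _ _ _ P _ measurableT _ mg' g'0 ndg'.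
have -> : (fun x => limn (g'^~ x)) = (fun x => f x + k%:E).
  apply/funext => x; apply/cvg_lim => //; apply: cvgeD => //.
  - exact: fin_num_adde_defl.
  - exact: cvg_cst.
rewrite int_shift //.
under eq_fun do rewrite /g' int_shift //.
move=> H.
have H2 : (fun n => \int[P]_x g n x + k%:E - k%:E) @ \oo --> \int[P]_x f x + k%:E - k%:E.
  apply: cvgeB => //; [exact: fin_num_adde_defl | exact: cvg_cst].
move: H2; rewrite addeK //.
by under eq_fun do rewrite addeK //.
Qed.

Lemma le_int_meas d (T : measurableType d) (R : realType) (P : {measure set T -> \bar R})
  (f g : T -> \bar R) :
  measurable_fun setT f -> measurable_fun setT g -> (forall x, f x <= g x) ->
  \int[P]_x f x <= \int[P]_x g x.
Proof.
move=> mf mg fg; rewrite [X in X <= _]integralE [X in _ <= X]integralE; apply: leeB.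
- apply: (ge0_le_integral P measurableT) => //; try exact: measurable_funepos.
  move=> x _; apply: (funepos_le (D:=setT)); [move=> y _; exact: fg | exact: in_setT].
- apply: (ge0_le_integral P measurableT) => //; try exact: measurable_funeneg.
  move=> x _; apply: (funeneg_le (D:=setT)); [move=> y _; exact: fg | exact: in_setT].
Qed.

Lemma trunc_le d (T : measurableType d) (R : realType) (mu nu : probability T R)
  (phi : T -> \bar R) :
  measurable_fun setT phi -> (forall x, phi x != -oo) ->
  \int[nu]_x phi^\+ x < +oo ->
  (forall n : nat, \int[mu]_x maxe (phi x) (- (n%:R)%:E) <=
                   \int[nu]_x maxe (phi x) (- (n%:R)%:E)) ->
  \int[mu]_x phi x <= \int[nu]_x phi x.
Proof.
move=> mphi phiN Pfin H.
pose g n x := maxe (phi x) (- (n%:R)%:E).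
have mg n : measurable_fun setT (g n).
  by apply: measurable_maxe => //; exact: measurable_cst.
have gpos n x : (g n)^\+ x = phi^\+ x.
  rewrite !funeposE /g -maxA (_ : maxe (- (n%:R)%:E) 0 = 0) //.
  by apply/max_idPr; rewrite lee_fin oppr_le0 ler0n.
have Eint (P : probability T R) n :
    \int[P]_x g n x = \int[P]_x phi^\+ x - \int[P]_x (g n)^\- x.
  by rewrite integralE; under eq_integral => x _ do rewrite gpos.
have step1 n : \int[mu]_x phi x <= \int[mu]_x g n x.
  by apply: le_int_meas => // x; rewrite /g le_max lexx.
have nd x : [set: T] x -> nondecreasing_seq (fun n => (g n)^\- x).
  move=> _ m n mn; apply: (funeneg_le (D:=setT)); last exact: in_setT.
  move=> y _; rewrite /g; apply: le_max2 => //.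
  by rewrite lee_fin lerN2 ler_nat.
have := @cvg_monotone_convergence _ _ _ nu _ measurableT (fun n => (g n)^\-)
  (fun n => measurable_funeneg (mg n)) (fun n x _ => funeneg_ge0 _ x) nd.
have -> : (fun x => limn (fun n => (g n)^\- x)) = phi^\-.
  apply/funext => x; apply/cvg_lim => //; apply: cvg_near_cst.
  move: (phiN x); case Ex: (phi x) => [r| |] // _.
    near=> n; rewrite !funenegE /g Ex; congr (maxe (- _) 0); apply/max_idPl.
    rewrite lee_fin lerNl; near: n; exact: nbhs_infty_ger.
  near=> n; rewrite !funenegE /g Ex; congr (maxe (- _) 0); apply/max_idPl.
move=> cvgm.
have Pfn : \int[nu]_x phi^\+ x \is a fin_num.
  rewrite ge0_fin_numE //; apply: integral_ge0 => x _; exact: funepos_ge0.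
have C : (fun n => \int[nu]_x phi^\+ x - \int[nu]_x (g n)^\- x) @ \oo -->
         \int[nu]_x phi^\+ x - \int[nu]_x phi^\- x.
  apply: cvgeB => //; [exact: fin_num_adde_defr | exact: cvg_cst].
rewrite [X in _ <= X]integralE; apply: (cvge_to_ge C); apply: nearW => n.
rewrite -Eint; apply: (le_trans (step1 n)); exact: H.
Unshelve. all: by end_near.
Qed.

End part1.

Section part2.
Local Open Scope ereal_scope.

Section geo.
Variables (R : realType) (d : nat).
Implicit Types (x y : 'rV[R]_d).

Lemma near_norm x (e : R) : (0 < e)%R -> nbhs x [set y | (`|x - y| < e)%R].
Proof. move=> e0; have := nbhsx_ballx x e e0; by rewrite -ball_normE. Qed.

Lemma nbhs_norm_ex x (V : set 'rV[R]_d) : nbhs x V ->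
  exists2 e : R, (0 < e)%R & forall y, (`|x - y| < e)%R -> V y.
Proof.
move=> /nbhs_ballP [e e0 H]; exists e => // y xy; apply: H.
by rewrite -ball_normE.
Qed.

Lemma lsc_maxc (phi : 'rV[R]_d -> \bar R) (c : R) :
  lower_semicontinuous phi -> lower_semicontinuous (fun x => maxe (phi x) c%:E).
Proof.
move=> lphi x a; rewrite lt_max => /orP [/lphi [V Vx HV]|ac].
  by exists V => // y /HV ay; rewrite lt_max ay.
exists setT; first exact: filterT.
by move=> y _; rewrite lt_max ac orbT.
Qed.

Lemma convex_maxc (phi : 'rV[R]_d -> \bar R) (c : R) :
  ext_convex phi -> ext_convex (fun x => maxe (phi x) c%:E).
Proof.
move=> cphi x y t /andP [t0 t1].
have t0' : (0 <= t%:E) by rewrite lee_fin ltW.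
have t1' : (0 <= (1 - t)%:E) by rewrite lee_fin subr_ge0 ltW.
rewrite ge_max; apply/andP; split.
  apply: (le_trans (cphi x y t _)); first by rewrite t0 t1.
  by apply: leeD; apply: lee_wpmul2l => //; rewrite le_max lexx.
rewrite [X in X <= _](_ : c%:E = (1 - t)%:E * c%:E + t%:E * c%:E); last first.
  by rewrite -!EFinM -EFinD; congr (_%:E); ring.
by apply: leeD; apply: lee_wpmul2l => //; rewrite le_max lexx orbT.
Qed.

Lemma proper_maxc (phi : 'rV[R]_d -> \bar R) (c : R) :
  proper_fun phi -> proper_fun (fun x => maxe (phi x) c%:E).
Proof.
move=> [h1 [x0 h2]]; split.
  move=> x; apply/negP => /eqP H.
  have : c%:E <= maxe (phi x) c%:E by rewrite le_max lexx orbT.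
  by rewrite H.
exists x0; move: h2; case: (phi x0) => [r| |] //= _.
  by rewrite -EFin_max.
by rewrite (_ : maxe -oo c%:E = c%:E) //; apply/max_idPr; exact: leNye.
Qed.

Lemma lip_lsc (phi : 'rV[R]_d -> R) :
  lipschitz_fun phi -> lower_semicontinuous (fun x => (phi x)%:E).
Proof.
move=> [L HL] x a; rewrite lte_fin => ax.
have L1 : (0 < `|L| + 1)%R by rewrite ltr_wpDl.
set e := ((phi x - a) / (`|L| + 1))%R.
have e0 : (0 < e)%R by rewrite divr_gt0 // subr_gt0.
exists [set y | (`|x - y| < e)%R]; first exact: near_norm.
move=> y /= xy; rewrite lte_fin.
have h1 : ((`|L| + 1) * `|x - y| < phi x - a)%R by rewrite mulrC -ltr_pdivlMr.
have h2 : (L * `|x - y| <= (`|L| + 1) * `|x - y|)%R.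
  by apply: ler_wpM2r => //; apply: (le_trans (ler_norm L)); rewrite lerDl.
have h3 : (phi x - phi y <= `|phi x - phi y|)%R by exact: ler_norm.
have h4 := HL x y.
lra.
Qed.

Lemma conv_EFin (phi : 'rV[R]_d -> R) :
  real_convex phi -> ext_convex (fun x => (phi x)%:E).
Proof. by move=> c x y t t01; rewrite -!EFinM -EFinD lee_fin; exact: c. Qed.

Lemma norm_lip : lipschitz_fun (fun x : 'rV[R]_d => `|x|%R).
Proof. by exists 1%R => x y; rewrite mul1r; exact: ler_dist_dist. Qed.

End geo.

Lemma lsc_meas (R : realType) (d : nat) (f : 'rV[R]_d -> \bar R) :
  lower_semicontinuous f -> measurable_fun [set: Borel R d] (fun x : Borel R d => f x).
Proof.
move=> scif; apply: (measurability _ (ErealGenOInfty.measurableE R)).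
move=> /= _ [_ [a ->]] <-; apply: measurableI => //.
rewrite preimage_itvoy; move/lower_semicontinuousP : scif => /(_ a) o.
exact: sub_gen_smallest.
Qed.

Lemma neg_bounded d (T : measurableType d) (R : realType) (P : probability T R)
  (phi : T -> \bar R) (c : R) :
  measurable_fun setT phi -> (forall x, c%:E <= phi x) -> \int[P]_x phi^\- x < +oo.
Proof.
move=> mphi hc.
apply: (@le_lt_trans _ _ (\int[P]_x (cst `|c|%:E) x)).
  apply: (ge0_le_integral P measurableT) => //.
  - exact: measurable_funeneg.
  - move=> x _; rewrite funenegE ge_max lee_fin normr_ge0 andbT /=.
    rewrite leeNl; apply: le_trans (hc x); rewrite -EFinN lee_fin lerNl.
    move: (ler_norm (-c)%R); rewrite normrN => ?; lra.
rewrite integral_cst // [X in _ * X](_ : _ = 1%E); last exact: probability_setT.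
by rewrite mule1 ltry.
Qed.


Lemma lip_pos_int (R : realType) (d : nat) (P : probability (Borel R d) R)
  (phi : 'rV[R]_d -> R) :
  finite_first_moment P -> lipschitz_fun phi ->
  \int[P]_x ((fun x => (phi x)%:E)^\+ x) < +oo.
Proof.
move=> fm Lphi; have [L HL] := Lphi.
set K := `|phi 0|%R; set M := `|L|%R.
have mn : measurable_fun [set: Borel R d] (fun x : Borel R d => (`|x : 'rV[R]_d|%R)%:E).
  exact: (@lsc_meas R d _ (@lip_lsc R d _ (norm_lip R d))).
have mphi : measurable_fun [set: Borel R d] (fun x : Borel R d => (phi x)%:E).
  exact: (@lsc_meas R d _ (@lip_lsc R d _ Lphi)).
apply: (@le_lt_trans _ _ (\int[P]_x (K%:E + M%:E * (`|x : 'rV[R]_d|%R)%:E))).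
  apply: (ge0_le_integral P measurableT) => //.
  - exact: measurable_funepos.
  - by apply: emeasurable_funD => //; exact: measurable_funeM.
  - move=> x _; rewrite funeposE ge_max -EFinM -EFinD !lee_fin.
    have h1 := HL x (0 : 'rV[R]_d)%R; rewrite subr0 in h1.
    have h2 : (phi x - phi 0 <= `|phi x - phi 0|)%R by exact: ler_norm.
    have h3 : (phi 0 <= K)%R by exact: ler_norm.
    have h4 : (L * `|x : 'rV[R]_d| <= M * `|x : 'rV[R]_d|)%R.
      by apply: ler_wpM2r => //; exact: ler_norm.
    have h5 : (0 <= K)%R by exact: normr_ge0.
    have h6 : (0 <= M * `|x : 'rV[R]_d|)%R by apply: mulr_ge0; exact: normr_ge0.
    apply/andP; split; lra.
rewrite ge0_integralD //; try exact: measurable_funeM.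
rewrite integral_cst // [X in _ * X](_ : _ = 1%E); last exact: probability_setT.
rewrite ge0_integralZl //; try (by rewrite lee_fin); try (by move=> x _; rewrite lee_fin).
have If : \int[P]_x (`|x : 'rV[R]_d|%R)%:E \is a fin_num.
  rewrite ge0_fin_numE //; apply: integral_ge0 => x _; by rewrite lee_fin.
by rewrite -(fineK If) mule1 -EFinM -EFinD ltry.
- by rewrite lee_fin; exact: normr_ge0.
- by move=> x _; rewrite lee_fin; exact: normr_ge0.
- by move=> x _; rewrite -EFinM lee_fin; apply: mulr_ge0; exact: normr_ge0.
Qed.

End part2.

Section part3.
Local Open Scope ereal_scope.

Lemma ebound (R : realType) (a s : R) (b : \bar R) : b != -oo ->
  (forall r, b = r%:E -> (a <= r + s)%R) -> a%:E <= b + s%:E.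
Proof.
case: b => [r| |] // _ H; last exact: leey.
rewrite -EFinD lee_fin; exact: H.
Qed.

Section env.
Variables (R : realType) (d : nat) (phi : 'rV[R]_d -> \bar R) (c : R).
Hypotheses (lphi : lower_semicontinuous phi) (phiN : forall x, phi x != -oo).
Variable x0 : 'rV[R]_d.
Hypotheses (phix0 : phi x0 != +oo) (cphi : ext_convex phi)
  (hc : forall x, c%:E <= phi x).

Definition F (n : nat) (x : 'rV[R]_d) :=
  ereal_inf (range (fun y => phi y + (n%:R * `|x - y|)%:E)).

Lemma F_ub n x y : F n x <= phi y + (n%:R * `|x - y|)%:E.
Proof. by apply: ereal_inf_lbound; exists y. Qed.

Lemma F_lb n x : c%:E <= F n x.
Proof.
apply/ereal_infP => _ [y _ <-]; apply: lee_paddr; last exact: hc.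
by rewrite lee_fin; apply: mulr_ge0 => //; exact: normr_ge0.
Qed.

Lemma F_fin n x : F n x \is a fin_num.
Proof.
rewrite fin_numE; apply/andP; split.
  apply/eqP => E; have := F_lb n x; by rewrite E.
have := F_ub n x x0; move: phix0 (phiN x0); case: (phi x0) => [r| |] // _ _.
by move=> h; apply/eqP => E; rewrite E in h.
Qed.

Definition f n x := fine (F n x).

Lemma fE n x : (f n x)%:E = F n x.
Proof. by rewrite fineK // F_fin. Qed.

Lemma f_lip n x x' : (f n x - f n x' <= n%:R * `|x - x'|)%R.
Proof.
have : ((f n x - n%:R * `|x - x'|)%:E <= F n x').
  apply/ereal_infP => _ [y _ <-]; apply: ebound (phiN y) _ => r Er.
  have := F_ub n x y; rewrite -fE Er -EFinD lee_fin => h.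
  have t := ler_distD x' x y.
  have := ler_wpM2l (ler0n _ n) t; rewrite mulrDr => h2.
  lra.
rewrite -fE lee_fin; lra.
Qed.

Lemma f_lipschitz n : lipschitz_fun (f n).
Proof.
exists n%:R => x y; rewrite ler_norml; apply/andP; split; last exact: f_lip.
have := f_lip n y x; rewrite distrC; lra.
Qed.

Lemma F_mono m n x : (m <= n)%N -> F m x <= F n x.
Proof.
move=> mn; apply/ereal_infP => _ [y _ <-]; apply: (le_trans (F_ub m x y)).
apply: leeD => //; rewrite lee_fin; apply: ler_wpM2r; first exact: normr_ge0.
by rewrite ler_nat.
Qed.

Lemma F_le_phi n x : F n x <= phi x.
Proof. by have := F_ub n x x; rewrite subrr normr0 mulr0 adde0. Qed.

Lemma real_of_lt y (s b : R) : phi y + s%:E < b%:E ->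
  exists r, phi y = r%:E /\ (r + s < b)%R.
Proof.
move: (phiN y); case: (phi y) => [r| |] // _.
by rewrite -EFinD lte_fin => h; exists r.
Qed.

Lemma f_convex n : real_convex (f n).
Proof.
move=> x x' t /andP[t0 t1].
apply/ler_addgt0Pr => e e0.
have [_ [y _ <-] hy] := lb_ereal_inf_adherent e0 (F_fin n x).
have [_ [y' _ <-] hy'] := lb_ereal_inf_adherent e0 (F_fin n x').
rewrite -/(F n x) -fE -EFinD in hy.
rewrite -/(F n x') -fE -EFinD in hy'.
have [r [Er hr]] := real_of_lt _ _ _ hy.
have [r' [Er' hr']] := real_of_lt _ _ _ hy'.
set z := ((1 - t) *: x + t *: x')%R.
set w := ((1 - t) *: y + t *: y')%R.
have h1 := F_ub n z w; rewrite -fE in h1.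
have h2 := cphi y y' t; rewrite t0 t1 Er Er' -!EFinM -EFinD in h2.
have /(_ isT) {h2} h2 := h2.
have [p Ep] : exists p, phi w = p%:E.
  move: (phiN w) h2; case: (phi w) => [p| |] // _ _; by exists p.
rewrite Ep -EFinD !lee_fin in h1 h2.
have h3 : (`|z - w| <= (1 - t) * `|x - y| + t * `|x' - y'|)%R.
  have -> : (z - w = (1 - t) *: (x - y) + t *: (x' - y'))%R.
    by rewrite /z /w !scalerBr opprD addrACA.
  apply: (le_trans (ler_normD _ _)); rewrite !normrZ ger0_norm; last by rewrite subr_ge0 ltW.
  by rewrite ger0_norm // ltW.
have n0 : (0 <= n%:R :> R)%R by exact: ler0n.
have h4 := ler_wpM2l n0 h3.
have t0' : (0 <= 1 - t)%R by rewrite subr_ge0 ltW.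
have h5 := ler_wpM2l t0' (ltW hr).
have h6 := ler_wpM2l (ltW t0) (ltW hr').
rewrite !mulrDr in h4 h5 h6.
nra.
Qed.

Lemma KEY x (a : R) : a%:E < phi x -> exists n, a%:E <= F n x.
Proof.
move=> /lphi [V Vx HV]; have [del del0 Hdel] := @nbhs_norm_ex R d x V Vx.
have [N HN] : exists N : nat, ((a - c) / del < N%:R)%R.
  have [N _ HN] := nbhs_infty_gtr ((a - c) / del); exists N; exact: (HN N (leqnn N)).
exists N; apply/ereal_infP => _ [y _ <-].
have [xy|xy] := ltP (`|x - y|)%R del.
  apply: lee_paddr; last exact/ltW/HV/Hdel.
  by rewrite lee_fin; apply: mulr_ge0 => //; exact: normr_ge0.
apply: ebound (phiN y) _ => r Er.
have := hc y; rewrite Er lee_fin => cr.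
have h1 : (a - c < N%:R * del)%R by rewrite -ltr_pdivrMr.
have h2 : (N%:R * del <= N%:R * `|x - y|)%R by apply: ler_wpM2l.
lra.
Qed.

Lemma F_cvg x : (fun n => F n x) @ \oo --> phi x.
Proof.
have nd : nondecreasing_seq (fun n => F n x) by move=> m n mn; exact: F_mono.
suff <- : ereal_sup (range (fun n => F n x)) = phi x.
  exact: ereal_nondecreasing_cvgn.
apply/le_anti/andP; split.
  by apply/ereal_supP => _ [n _ <-]; exact: F_le_phi.
have ub n : F n x <= ereal_sup (range (fun n => F n x)).
  by apply: ereal_sup_ubound; exists n.
move: (phiN x); case E: (phi x) => [r| |] // _.
  apply/lee_subgt0Pr => e e0.
  have [n hn] : exists n, (r - e)%:E <= F n x.
    by apply: KEY; rewrite E lte_fin ltrBlDr ltrDl.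
  by rewrite -EFinB; apply: le_trans hn (ub n).
rewrite leye_eq; move: ub; case: (ereal_sup _) => [s| |] ub //.
  have [n hn] : exists n, (s + 1)%:E <= F n x.
    by apply: KEY; rewrite E ltry.
  have := le_trans hn (ub n); rewrite lee_fin; lra.
by have := le_trans (F_lb 0 x) (ub 0%N).
Qed.

Lemma env_main (mu nu : probability (Borel R d) R) :
  (forall psi : 'rV[R]_d -> R,
      lipschitz_fun psi -> real_convex psi ->
      (\int[mu]_x (psi x)%:E <= \int[nu]_x (psi x)%:E)%E) ->
  \int[mu]_x phi x <= \int[nu]_x phi x.
Proof.
move=> H.
pose g n (x : Borel R d) := (f n x)%:E.
have mg n : measurable_fun setT (g n) by exact: (@lsc_meas R d _ (@lip_lsc R d _ (f_lipschitz n))).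
have gk n x : (- `|c|)%:E <= g n x.
  rewrite /g fE; apply: le_trans (F_lb n x); rewrite lee_fin.
  move: (ler_norm (-c)%R); rewrite normrN => ?; lra.
have nd x : nondecreasing_seq (g ^~ x) by move=> m n mn; rewrite /g !fE; exact: F_mono.
have gf x : g ^~ x @ \oo --> phi x.
  have -> : g ^~ x = (fun n => F n x) by apply/funext => n; rewrite /g fE.
  exact: F_cvg.
have Cm := @mono_lim _ _ _ mu _ _ _ (normr_ge0 c) mg gk nd gf.
have Cn := @mono_lim _ _ _ nu _ _ _ (normr_ge0 c) mg gk nd gf.
apply: (lee_cvg_to Cm Cn); apply: nearW => n.
exact: H (f_lipschitz n) (f_convex n).
Qed.

End env.

End part3.

Lemma iii_ii (R : realType) (d : nat) (mu nu : probability (Borel R d) R) :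
  finite_first_moment mu -> finite_first_moment nu ->
  (forall phi : 'rV[R]_d -> R,
      lipschitz_fun phi -> real_convex phi ->
      (\int[mu]_x (phi x)%:E <= \int[nu]_x (phi x)%:E)%E) ->
  forall phi : 'rV[R]_d -> \bar R,
      lower_semicontinuous phi -> proper_fun phi -> ext_convex phi ->
      (exists c : R, forall x, (c%:E <= phi x)%E) ->
      (\int[mu]_x phi x <= \int[nu]_x phi x)%E.
Proof.
move=> fmu fnu H phi lphi [phiN [x0 phix0]] cphi [c hc].
exact: (@env_main R d phi c lphi phiN x0 phix0 cphi hc mu nu H).
Qed.

Theorem mainTheorem7 (R : realType) (d : nat)
  (mu nu : probability (Borel R d) R) :
  finite_first_moment mu -> finite_first_moment nu ->
  let cond_i :=
    forall phi : 'rV[R]_d -> \bar R,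
      lower_semicontinuous phi -> proper_fun phi -> ext_convex phi ->
      integral_exists mu phi -> integral_exists nu phi ->
      (\int[mu]_x phi x <= \int[nu]_x phi x)%E in
  let cond_ii :=
    forall phi : 'rV[R]_d -> \bar R,
      lower_semicontinuous phi -> proper_fun phi -> ext_convex phi ->
      (exists c : R, forall x, (c%:E <= phi x)%E) ->
      (\int[mu]_x phi x <= \int[nu]_x phi x)%E in
  let cond_iii :=
    forall phi : 'rV[R]_d -> R,
      lipschitz_fun phi -> real_convex phi ->
      (\int[mu]_x (phi x)%:E <= \int[nu]_x (phi x)%:E)%E in
  (cond_i <-> cond_ii) /\ (cond_ii <-> cond_iii).
Proof.
move=> fmu fnu cond_i cond_ii cond_iii.
have gen : cond_ii -> forall phi : 'rV[R]_d -> \bar R,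
    lower_semicontinuous phi -> proper_fun phi -> ext_convex phi ->
    integral_exists nu phi -> (\int[mu]_x phi x <= \int[nu]_x phi x)%E.
  move=> H phi lphi pphi cphi [mphi hint].
  have [Pfin|Pinf] := boolP (\int[nu]_x phi^\+ x < +oo)%E.
    apply: trunc_le => //; first by case: pphi.
    move=> n; rewrite -EFinN; apply: H.
    - exact: lsc_maxc.
    - exact: proper_maxc.
    - exact: convex_maxc.
    - by exists (- n%:R)%R => x; rewrite le_max lexx orbT.
  case: hint => [/(negP Pinf)//|Hn].
  have Pi : (\int[nu]_x phi^\+ x = +oo)%E by apply/eqP; move: Pinf; rewrite ltey negbK.
  have Nf : (\int[nu]_x phi^\- x)%E \is a fin_num.
    rewrite ge0_fin_numE //; apply: integral_ge0 => x _; exact: funeneg_ge0.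
  rewrite [X in (_ <= X)%E]integralE Pi -(fineK Nf) -EFinN addye //; exact: leey.
split; split.
- move=> Hi phi l p c [c0 hc]; apply: Hi => //.
  + split; [exact: (@lsc_meas R d _ l) | right; exact: (@neg_bounded _ _ _ mu _ _ (@lsc_meas R d _ l) hc)].
  + split; [exact: (@lsc_meas R d _ l) | right; exact: (@neg_bounded _ _ _ nu _ _ (@lsc_meas R d _ l) hc)].
- move=> Hii phi l p c _ ie; exact: gen.
- move=> Hii phi Lp Cp; apply: gen => //.
  + exact: (@lip_lsc R d _ Lp).
  + split => [x //|]; by exists (0 : 'rV[R]_d)%R.
  + split; [exact: (@lsc_meas R d _ (@lip_lsc R d _ Lp)) | left; exact: lip_pos_int].
- move=> Hiii; exact: iii_ii.
Qed.
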